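(* Consider the system $\dot q=Mp$, $\dot p=-M^Tq-\nabla\psi(p)+Bu$ with $q,p\in\mathbb R^n$, where $M\in\mathbb R^{n\times n}$ is invertible, $B\in\mathbb R^{n\times m}$, and $\psi:\mathbb R^n\to\mathbb R$ is continuously differentiable with locally Lipschitz gradient, strictly convex, and satisfies $\lim_{\|x\|\to\infty}\psi(x)/\|x\|=\infty$. If the input $u\equiv\mathrm u\in\mathbb R^m$ is constant, then every trajectory satisfies $p(t)\to p_0=0$ and $q(t)\to q_0=(M^T)^{-1}B\mathrm u-(M^T)^{-1}\nabla\psi(0)$ as $t\to\infty$. *)

(* Defs.v *)
From Stdlib Require Import Reals Lra.
Open Scope R_scope.

(* Vectors of R^n are represented as functions nat -> R, of which only the
   entries with index i < n are meaningful; matrices as nat -> nat -> R. *)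

Fixpoint rsum (n : nat) (f : nat -> R) : R :=
  match n with
  | O => 0
  | S k => rsum k f + f k
  end.

Definition dot (n : nat) (x y : nat -> R) : R := rsum n (fun i => x i * y i).
Definition vnorm (n : nat) (x : nat -> R) : R := sqrt (dot n x x).
Definition vsub (x y : nat -> R) : nat -> R := fun i => x i - y i.
Definition vcomb (a : R) (x : nat -> R) (b : R) (y : nat -> R) : nat -> R :=
  fun i => a * x i + b * y i.
Definition zerov : nat -> R := fun _ => 0.

Definition matvec (cols : nat) (A : nat -> nat -> R) (x : nat -> R) : nat -> R :=
  fun i => rsum cols (fun j => A i j * x j).
Definition matTvec (n : nat) (A : nat -> nat -> R) (x : nat -> R) : nat -> R :=
  fun i => rsum n (fun j => A j i * x j).

Definition is_inverse (n : nat) (A Ainv : nat -> nat -> R) : Prop :=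
  forall i j, (i < n)%nat -> (j < n)%nat ->
    rsum n (fun k => A i k * Ainv k j) = (if Nat.eqb i j then 1 else 0) /\
    rsum n (fun k => Ainv i k * A k j) = (if Nat.eqb i j then 1 else 0).

Definition invertible (n : nat) (A : nat -> nat -> R) : Prop :=
  exists Ainv, is_inverse n A Ainv.

Definition has_gradient_at (n : nat) (psi : (nat -> R) -> R)
    (g : (nat -> R) -> (nat -> R)) (x : nat -> R) : Prop :=
  forall eps, 0 < eps -> exists delta, 0 < delta /\
    forall y, vnorm n (vsub y x) < delta ->
      Rabs (psi y - psi x - dot n (g x) (vsub y x)) <= eps * vnorm n (vsub y x).

Definition vcontinuous_at (n : nat) (g : (nat -> R) -> (nat -> R)) (x : nat -> R) : Prop :=
  forall eps, 0 < eps -> exists delta, 0 < delta /\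
    forall y, vnorm n (vsub y x) < delta -> vnorm n (vsub (g y) (g x)) < eps.

Definition C1_with_gradient (n : nat) (psi : (nat -> R) -> R)
    (g : (nat -> R) -> (nat -> R)) : Prop :=
  forall x, has_gradient_at n psi g x /\ vcontinuous_at n g x.

Definition locally_lipschitz (n : nat) (g : (nat -> R) -> (nat -> R)) : Prop :=
  forall x, exists r L, 0 < r /\
    forall y z, vnorm n (vsub y x) < r -> vnorm n (vsub z x) < r ->
      vnorm n (vsub (g y) (g z)) <= L * vnorm n (vsub y z).

Definition vneq (n : nat) (x y : nat -> R) : Prop :=
  exists i, (i < n)%nat /\ x i <> y i.

Definition strictly_convex (n : nat) (psi : (nat -> R) -> R) : Prop :=
  forall x y lam, vneq n x y -> 0 < lam < 1 ->
    psi (vcomb lam x (1 - lam) y) < lam * psi x + (1 - lam) * psi y.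

Definition superlinear (n : nat) (psi : (nat -> R) -> R) : Prop :=
  forall K, exists Rr, 0 < Rr /\
    forall x, Rr <= vnorm n x -> K <= psi x / vnorm n x.

Definition vconverges (n : nat) (v : R -> nat -> R) (v0 : nat -> R) : Prop :=
  forall eps, 0 < eps -> exists T, forall t, T <= t -> vnorm n (vsub (v t) v0) < eps.

(* Main.v *)
Require Import Defs.
From Stdlib Require Import Reals Lra Lia ClassicalEpsilon Classical.
Open Scope R_scope.

Lemma rsum_ext N f g : (forall i, (i < N)%nat -> f i = g i) -> rsum N f = rsum N g.
Proof. induction N; intros H; simpl; auto. rewrite IHN by (intros; apply H; lia). rewrite H by lia. auto. Qed.

Lemma rsum_plus N f g : rsum N (fun i => f i + g i) = rsum N f + rsum N g.
Proof. induction N; simpl; [lra|]. rewrite IHN; lra. Qed.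

Lemma rsum_scal N c f : rsum N (fun i => c * f i) = c * rsum N f.
Proof. induction N; simpl; [lra|]. rewrite IHN; lra. Qed.

Lemma rsum_opp N f : rsum N (fun i => - f i) = - rsum N f.
Proof. induction N; simpl; [lra|]. rewrite IHN; lra. Qed.

Lemma rsum_minus N f g : rsum N (fun i => f i - g i) = rsum N f - rsum N g.
Proof. induction N; simpl; [lra|]. rewrite IHN; lra. Qed.

Lemma rsum_zero N : rsum N (fun _ => 0) = 0.
Proof. induction N; simpl; [lra|]. rewrite IHN; lra. Qed.

Lemma rsum_swap N K (f : nat -> nat -> R) :
  rsum N (fun i => rsum K (fun j => f i j)) = rsum K (fun j => rsum N (fun i => f i j)).
Proof.
  induction N; simpl.
  - rewrite rsum_zero; auto.
  - rewrite IHN. rewrite <- rsum_plus. auto.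
Qed.

Lemma rsum_le N f g : (forall i, (i < N)%nat -> f i <= g i) -> rsum N f <= rsum N g.
Proof. induction N; intros H; simpl; [lra|]. assert (f N <= g N) by (apply H; lia).
  assert (rsum N f <= rsum N g) by (apply IHN; intros; apply H; lia). lra. Qed.

Lemma rsum_nonneg N f : (forall i, (i < N)%nat -> 0 <= f i) -> 0 <= rsum N f.
Proof. intros H. rewrite <- (rsum_zero N). apply rsum_le; auto. Qed.

Lemma rsum_term N f i : (forall j, (j < N)%nat -> 0 <= f j) -> (i < N)%nat -> f i <= rsum N f.
Proof.
  induction N; intros H Hi; [lia|]. simpl.
  destruct (Nat.eq_dec i N) as [->|Hne].
  - assert (0 <= rsum N f) by (apply rsum_nonneg; intros; apply H; lia). lra.
  - assert (f i <= rsum N f) by (apply IHN; [intros; apply H; lia | lia]).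
    assert (0 <= f N) by (apply H; lia). lra.
Qed.

Lemma rsum_abs N f : Rabs (rsum N f) <= rsum N (fun i => Rabs (f i)).
Proof. induction N; simpl. rewrite Rabs_R0; lra.
  eapply Rle_trans; [apply Rabs_triang|]. lra. Qed.

Lemma rsum_const N c : rsum N (fun _ => c) = INR N * c.
Proof. induction N; [simpl; lra|]. cbn [rsum]. rewrite IHN. rewrite S_INR. lra. Qed.

Lemma rsum_bound N f c : (forall i, (i < N)%nat -> Rabs (f i) <= c) -> Rabs (rsum N f) <= INR N * c.
Proof. intros H. eapply Rle_trans; [apply rsum_abs|]. rewrite <- rsum_const. apply rsum_le; auto. Qed.

Lemma rsum_delta N (x : nat -> R) i : (i < N)%nat ->
  rsum N (fun k => (if Nat.eqb k i then 1 else 0) * x k) = x i.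
Proof.
  induction N; intros Hi; [lia|]. simpl.
  destruct (Nat.eq_dec i N) as [->|Hne].
  - rewrite Nat.eqb_refl.
    rewrite (rsum_ext N _ (fun _ => 0)). rewrite rsum_zero; lra.
    intros j Hj. destruct (Nat.eqb_spec j N); [lia|lra].
  - rewrite IHN by lia. destruct (Nat.eqb_spec N i); [lia|lra].
Qed.

Lemma rsum_deriv N (F : nat -> R -> R) (F' : nat -> R) t :
  (forall i, (i < N)%nat -> derivable_pt_lim (F i) t (F' i)) ->
  derivable_pt_lim (fun s => rsum N (fun i => F i s)) t (rsum N F').
Proof.
  induction N; intros H; simpl.
  - apply (derivable_pt_lim_const 0 t).
  - apply (derivable_pt_lim_plus (fun s => rsum N (fun i => F i s)) (F N)).
    apply IHN; intros; apply H; lia. apply H; lia.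
Qed.

Lemma dot_nonneg N x : 0 <= dot N x x.
Proof. unfold dot. apply rsum_nonneg. intros. nra. Qed.

Lemma vnorm_nonneg N x : 0 <= vnorm N x.
Proof. unfold vnorm. apply sqrt_pos. Qed.

Lemma coord_le_vnorm N x i : (i < N)%nat -> Rabs (x i) <= vnorm N x.
Proof.
  intros Hi. unfold vnorm. rewrite <- sqrt_Rsqr_abs. apply sqrt_le_1_alt.
  unfold Rsqr, dot. apply (rsum_term N (fun i => x i * x i)); auto. intros; nra.
Qed.

Lemma vnorm_coord_bound N x a : 0 <= a -> (forall i, (i < N)%nat -> Rabs (x i) <= a) ->
  vnorm N x <= INR N * a.
Proof.
  intros Ha H. unfold vnorm.
  assert (HN : 0 <= INR N) by apply pos_INR.
  rewrite <- (sqrt_Rsqr (INR N * a)) by nra. apply sqrt_le_1_alt.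
  unfold dot. eapply Rle_trans.
  - apply (rsum_le N _ (fun _ => a * a)). intros i Hi. specialize (H i Hi).
    assert (0 <= Rabs (x i)) by apply Rabs_pos.
    assert (x i * x i = Rabs (x i) * Rabs (x i)). { rewrite <- Rabs_mult, Rabs_pos_eq; [reflexivity|]. apply Rle_0_sqr. }
    rewrite H1. apply Rmult_le_compat; auto.
  - rewrite rsum_const. unfold Rsqr.
    destruct N. simpl; lra.
    assert (1 <= INR (S N)) by (rewrite S_INR; pose proof (pos_INR N); lra). nra.
Qed.

Lemma vnorm_small N x eps : 0 < eps -> (forall i, (i < N)%nat -> Rabs (x i) <= eps / (INR N + 1)) ->
  vnorm N x < eps.
Proof.
  intros He H. assert (HN : 0 <= INR N) by apply pos_INR.
  assert (0 < eps / (INR N + 1)) by (apply Rdiv_lt_0_compat; lra).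
  set (a := eps / (INR N + 1)) in *.
  assert (eps = a * (INR N + 1)) by (unfold a; field; lra). clearbody a.
  eapply Rle_lt_trans. apply vnorm_coord_bound; [left; exact H0|exact H]. nra.
Qed.

Lemma vnorm_zero_if N x : (forall i, (i < N)%nat -> x i = 0) -> vnorm N x = 0.
Proof. intros H. unfold vnorm, dot. rewrite (rsum_ext N _ (fun _ => 0)). rewrite rsum_zero. apply sqrt_0.
  intros i Hi; rewrite H; auto; lra. Qed.

Lemma vnorm_scal N c x : vnorm N (fun i => c * x i) = Rabs c * vnorm N x.
Proof.
  unfold vnorm, dot. rewrite (rsum_ext N _ (fun i => (c*c) * (x i * x i))) by (intros; ring).
  rewrite rsum_scal. rewrite sqrt_mult. rewrite <- sqrt_Rsqr_abs. auto.
  nra. apply rsum_nonneg; intros; nra.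
Qed.

Lemma Rabs_le_bt x a : Rabs x <= a -> -a <= x <= a.
Proof. intros H. pose proof (Rle_abs x). pose proof (Rle_abs (-x)). rewrite Rabs_Ropp in H1. lra. Qed.

Lemma dot_ext N x y x' y' : (forall i, (i < N)%nat -> x i = x' i) -> (forall i, (i < N)%nat -> y i = y' i) ->
  dot N x y = dot N x' y'.
Proof. intros H1 H2. unfold dot. apply rsum_ext. intros i Hi. rewrite H1, H2 by auto. auto. Qed.

Lemma vnorm_ext N x y : (forall i, (i < N)%nat -> x i = y i) -> vnorm N x = vnorm N y.
Proof. intros H. unfold vnorm. f_equal. apply dot_ext; auto. Qed.

Lemma dot_vsub_l N a b c : dot N (vsub a b) c = dot N a c - dot N b c.
Proof. unfold dot, vsub. rewrite <- rsum_minus. apply rsum_ext; intros; ring. Qed.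

Lemma dot_scal_r N a c d : dot N a (fun i => c * d i) = c * dot N a d.
Proof. unfold dot. rewrite <- rsum_scal. apply rsum_ext; intros; ring. Qed.

Lemma dot_comm N a b : dot N a b = dot N b a.
Proof. unfold dot. apply rsum_ext; intros; ring. Qed.

Lemma vneq_vnorm_pos N x : vneq N x zerov -> 0 < vnorm N x.
Proof. intros [i [Hi Hx]]. unfold zerov in Hx. pose proof (coord_le_vnorm N x i Hi).
  pose proof (Rabs_pos_lt _ Hx). lra. Qed.

Section Convex.
Variable n : nat.
Variable psi : (nat -> R) -> R.
Variable g : (nat -> R) -> (nat -> R).
Hypothesis HC1 : C1_with_gradient n psi g.
Hypothesis Hsc : strictly_convex n psi.

Lemma psi_congr x y : (forall i, (i < n)%nat -> y i = x i) -> psi y = psi x.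
Proof.
  intros H. destruct (HC1 x) as [Hg _].
  assert (Hz : vnorm n (vsub y x) = 0) by (apply vnorm_zero_if; intros; unfold vsub; rewrite H; auto; ring).
  assert (Hd : dot n (g x) (vsub y x) = 0).
  { unfold dot. rewrite (rsum_ext n _ (fun _ => 0)). apply rsum_zero. intros; unfold vsub; rewrite H; auto; ring. }
  destruct (Hg 1 Rlt_0_1) as [d [Hd0 Hd1]]. specialize (Hd1 y). rewrite Hz, Hd in Hd1.
  specialize (Hd1 Hd0). rewrite Rmult_0_r in Hd1.
  pose proof (Rabs_pos (psi y - psi x - 0)).
  assert (Rabs (psi y - psi x - 0) = 0) by lra.
  destruct (Rcase_abs (psi y - psi x - 0)) as [Hc|Hc]; [rewrite Rabs_left in H1 by auto|rewrite Rabs_right in H1 by auto]; lra.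
Qed.

Lemma vneq_sym x y : vneq n x y -> vneq n y x.
Proof. intros [i [Hi H]]. exists i; split; auto. Qed.

Lemma grad_ineq x y : psi x + dot n (g x) (vsub y x) <= psi y.
Proof.
  destruct (classic (vneq n y x)) as [Hne|Hne].
  2:{ assert (Heq : forall i, (i < n)%nat -> y i = x i).
      { intros i Hi. apply NNPP. intro Hc. apply Hne. exists i; auto. }
      rewrite (psi_congr x y Heq).
      assert (dot n (g x) (vsub y x) = 0).
      { unfold dot. rewrite (rsum_ext n _ (fun _ => 0)). apply rsum_zero. intros; unfold vsub; rewrite Heq; auto; ring. }
      lra. }
  set (G := dot n (g x) (vsub y x)).
  destruct (Rle_or_lt (psi x + G) (psi y)) as [Hle|Hlt]; auto. exfalso.
  set (gap := psi x + G - psi y).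
  set (nd := vnorm n (vsub y x)).
  assert (Hnd : 0 < nd).
  { destruct Hne as [i [Hi Hi']]. pose proof (coord_le_vnorm n (vsub y x) i Hi).
    assert (vsub y x i <> 0) by (unfold vsub; lra). pose proof (Rabs_pos_lt _ H0). unfold nd; lra. }
  assert (Hgap : 0 < gap) by (unfold gap; lra).
  destruct (proj1 (HC1 x) (gap / (2 * nd))) as [d [Hd0 Hd1]].
  { apply Rdiv_lt_0_compat; lra. }
  set (lam := Rmin (1/2) (d / (2 * nd))).
  assert (Hl0 : 0 < lam). { unfold lam. apply Rmin_pos; [lra|]. apply Rdiv_lt_0_compat; lra. }
  assert (Hl1 : lam < 1). { unfold lam. pose proof (Rmin_l (1/2) (d/(2*nd))). lra. }
  assert (Hl2 : lam * nd < d).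
  { unfold lam. pose proof (Rmin_r (1/2) (d/(2*nd))).
    assert (d / (2*nd) * nd = d/2) by (field; lra). 
    assert (Rmin (1/2) (d/(2*nd)) * nd <= d / (2*nd) * nd) by (apply Rmult_le_compat_r; lra). lra. }
  set (z := vcomb lam y (1 - lam) x).
  assert (Hzx : forall i, (i < n)%nat -> vsub z x i = lam * vsub y x i).
  { intros; unfold vsub, z, vcomb; ring. }
  assert (Hnz : vnorm n (vsub z x) = lam * nd).
  { rewrite (vnorm_ext n _ (fun i => lam * vsub y x i)) by auto. rewrite vnorm_scal.
    rewrite Rabs_pos_eq by lra. auto. }
  assert (HdG : dot n (g x) (vsub z x) = lam * G).
  { rewrite (dot_ext n _ _ (g x) (fun i => lam * vsub y x i)) by auto. apply dot_scal_r. }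
  specialize (Hd1 z). rewrite Hnz, HdG in Hd1. specialize (Hd1 Hl2).
  pose proof (Hsc y x lam Hne (conj Hl0 Hl1)) as Hcv. fold z in Hcv.
  apply Rabs_le_bt in Hd1. destruct Hd1 as [Hd1 _].
  assert (Heps : gap / (2 * nd) * (lam * nd) = lam * (gap / 2)) by (field; lra).
  rewrite Heps in Hd1.
  assert (lam * G - lam * (gap/2) < lam * (psi y - psi x)) by lra.
  assert (G - gap/2 < psi y - psi x).
  { apply Rmult_lt_reg_l with lam; auto. lra. }
  unfold gap in H0. lra.
Qed.

Lemma grad_ineq_strict x y : vneq n y x -> psi x + dot n (g x) (vsub y x) < psi y.
Proof.
  intros Hne.
  set (z := vcomb (1/2) y (1 - 1/2) x).
  pose proof (Hsc y x (1/2) Hne ltac:(lra)) as Hcv. fold z in Hcv.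
  pose proof (grad_ineq x z) as Hgi.
  rewrite (dot_ext n _ _ (g x) (fun i => (1/2) * vsub y x i)) in Hgi by (intros; unfold z, vsub, vcomb; ring).
  rewrite dot_scal_r in Hgi. lra.
Qed.

Definition Dg (x : nat -> R) := dot n (vsub (g x) (g zerov)) x.

Lemma Dg_nonneg x : 0 <= Dg x.
Proof.
  unfold Dg. rewrite dot_vsub_l.
  pose proof (grad_ineq zerov x). pose proof (grad_ineq x zerov).
  rewrite (dot_ext n _ _ (g zerov) x) in H by (intros; unfold vsub, zerov; ring).
  rewrite (dot_ext n _ _ (g x) (fun i => (-1) * x i)) in H0 by (intros; unfold vsub, zerov; ring).
  rewrite dot_scal_r in H0. lra.
Qed.

Lemma Dg_pos x : vneq n x zerov -> 0 < Dg x.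
Proof.
  intros Hne.
  unfold Dg. rewrite dot_vsub_l.
  pose proof (grad_ineq_strict zerov x Hne). pose proof (grad_ineq x zerov).
  rewrite (dot_ext n _ _ (g zerov) x) in H by (intros; unfold vsub, zerov; ring).
  rewrite (dot_ext n _ _ (g x) (fun i => (-1) * x i)) in H0 by (intros; unfold vsub, zerov; ring).
  rewrite dot_scal_r in H0. lra.
Qed.
End Convex.

Definition scv (u : nat -> R) (l : R) :=
  forall eps, 0 < eps -> exists N, forall k, (N <= k)%nat -> Rabs (u k - l) < eps.

Lemma arch_inv eps : 0 < eps -> exists k, / (INR k + 1) < eps.
Proof.
  intros He. destruct (INR_archimed eps 1 He) as [k Hk]. exists k.
  pose proof (pos_INR k).
  apply Rmult_lt_reg_l with (INR k + 1). lra. rewrite Rinv_r by lra. nra.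
Qed.

Lemma incr_ge (phi : nat -> nat) : (forall k, (phi k < phi (S k))%nat) -> forall k, (k <= phi k)%nat.
Proof. intros H k. induction k. lia. specialize (H k). lia. Qed.

Lemma incr_mono (phi : nat -> nat) : (forall k, (phi k < phi (S k))%nat) -> forall a b, (a <= b)%nat -> (phi a <= phi b)%nat.
Proof. intros H a b Hab. induction Hab. lia. specialize (H m). lia. Qed.

Lemma scv_sub u l phi : (forall k, (phi k < phi (S k))%nat) -> scv u l -> scv (fun k => u (phi k)) l.
Proof. intros Hp H eps He. destruct (H eps He) as [N HN]. exists N. intros k Hk. apply HN.
  pose proof (incr_ge phi Hp k). lia. Qed.

Lemma BW1 (u : nat -> R) C : (forall k, Rabs (u k) <= C) ->
  exists phi l, (forall k, (phi k < phi (S k))%nat) /\ scv (fun k => u (phi k)) l.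
Proof.
  intros Hb.
  destruct (Bolzano_Weierstrass u (fun c => -C <= c <= C) (compact_P3 (-C) C)) as [l Hl].
  { intros k. specialize (Hb k). pose proof (Rle_abs (u k)). pose proof (Rle_abs (- u k)).
    rewrite Rabs_Ropp in H0. lra. }
  assert (Hsel : forall k N, exists p, (N <= p)%nat /\ Rabs (u p - l) < / (INR k + 1)).
  { intros k N. assert (Hpos : 0 < / (INR k + 1)) by (apply Rinv_0_lt_compat; pose proof (pos_INR k); lra).
    destruct (Hl (fun y => Rabs (y - l) < / (INR k + 1)) N) as [p Hp].
    { exists (mkposreal _ Hpos). intros y Hy. exact Hy. }
    exists p; auto. }
  set (sel := fun k N => proj1_sig (constructive_indefinite_description _ (Hsel k N))).
  assert (Hs : forall k N, (N <= sel k N)%nat /\ Rabs (u (sel k N) - l) < / (INR k + 1)).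
  { intros k N. unfold sel. destruct (constructive_indefinite_description _ (Hsel k N)). simpl. auto. }
  set (phi := fix f k := match k with O => sel O O | S k' => sel (S k') (S (f k')) end).
  assert (Hphi : forall k, Rabs (u (phi k) - l) < / (INR k + 1)).
  { intros [|k]; simpl; apply Hs. }
  exists phi, l. split.
  - intros k. assert (E : phi (S k) = sel (S k) (S (phi k))) by reflexivity.
    rewrite E. destruct (Hs (S k) (S (phi k))) as [Ha _]. clearbody phi sel. lia.
  - intros eps He. destruct (arch_inv eps He) as [k0 Hk0]. exists k0. intros k Hk.
    eapply Rlt_le_trans. apply Hphi.
    assert (INR k0 <= INR k) by (apply le_INR; auto).
    assert (/ (INR k + 1) <= / (INR k0 + 1)).
    { apply Rinv_le_contravar. pose proof (pos_INR k0); lra. lra. } lra.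
Qed.

Lemma BWn n (x : nat -> nat -> R) C : (forall k i, (i < n)%nat -> Rabs (x k i) <= C) ->
  exists phi y, (forall k, (phi k < phi (S k))%nat) /\
    forall i, (i < n)%nat -> scv (fun k => x (phi k) i) (y i).
Proof.
  induction n; intros Hb.
  - exists (fun k => k), (fun _ => 0). split. intros; lia. intros; lia.
  - destruct IHn as [phi1 [y [Hp1 Hc1]]]. { intros; apply Hb; lia. }
    destruct (BW1 (fun k => x (phi1 k) n) C) as [phi2 [l [Hp2 Hc2]]]. { intros; apply Hb; lia. }
    exists (fun k => phi1 (phi2 k)), (fun i => if Nat.eqb i n then l else y i). split.
    + intros k. specialize (Hp2 k). assert (phi1 (S (phi2 k)) <= phi1 (phi2 (S k)))%nat.
      { apply incr_mono; auto. } specialize (Hp1 (phi2 k)). lia.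
    + intros i Hi. destruct (Nat.eqb_spec i n) as [->|Hne].
      * exact Hc2.
      * apply (scv_sub (fun k => x (phi1 k) i)); auto. apply Hc1. lia.
Qed.

Lemma scv_unif n (f : nat -> nat -> R) (l : nat -> R) :
  (forall i, (i < n)%nat -> scv (fun k => f k i) (l i)) ->
  forall eps, 0 < eps -> exists N, forall k, (N <= k)%nat -> forall i, (i < n)%nat -> Rabs (f k i - l i) < eps.
Proof.
  induction n; intros H eps He.
  - exists O. intros; lia.
  - destruct (IHn (fun i Hi => H i (Nat.lt_lt_succ_r _ _ Hi)) eps He) as [N1 H1].
    destruct (H n (Nat.lt_succ_diag_r n) eps He) as [N2 H2].
    exists (Nat.max N1 N2). intros k Hk i Hi.
    destruct (Nat.eq_dec i n) as [->|Hne].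
    + apply H2; lia.
    + apply H1; lia.
Qed.

Lemma tcv_unif n (f : R -> nat -> R) (l : nat -> R) :
  (forall i, (i < n)%nat -> forall eps, 0 < eps -> exists T, forall t, T <= t -> Rabs (f t i - l i) < eps) ->
  forall eps, 0 < eps -> exists T, forall t, T <= t -> forall i, (i < n)%nat -> Rabs (f t i - l i) < eps.
Proof.
  induction n; intros H eps He.
  - exists 0. intros; lia.
  - destruct (IHn (fun i Hi => H i (Nat.lt_lt_succ_r _ _ Hi)) eps He) as [N1 H1].
    destruct (H n (Nat.lt_succ_diag_r n) eps He) as [N2 H2].
    exists (Rmax N1 N2). intros k Hk i Hi.
    pose proof (Rmax_l N1 N2). pose proof (Rmax_r N1 N2).
    destruct (Nat.eq_dec i n) as [->|Hne].
    + apply H2; lra.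
    + apply H1; [lra|lia].
Qed.

Lemma mat_bound n (A : nat -> nat -> R) : exists C, 0 <= C /\ forall i j, (i < n)%nat -> (j < n)%nat -> Rabs (A i j) <= C.
Proof.
  exists (rsum n (fun i => rsum n (fun j => Rabs (A i j)))). split.
  - apply rsum_nonneg; intros; apply rsum_nonneg; intros; apply Rabs_pos.
  - intros i j Hi Hj. eapply Rle_trans.
    + apply (rsum_term n (fun j => Rabs (A i j))); auto. intros; apply Rabs_pos.
    + apply (rsum_term n (fun i => rsum n (fun j => Rabs (A i j)))); auto.
      intros; apply rsum_nonneg; intros; apply Rabs_pos.
Qed.

Lemma dot_bound n a b A B : 0 <= A -> (forall i, (i < n)%nat -> Rabs (a i) <= A) ->
  (forall i, (i < n)%nat -> Rabs (b i) <= B) -> Rabs (dot n a b) <= INR n * (A * B).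
Proof.
  intros HA Ha Hb. unfold dot. apply rsum_bound. intros i Hi. rewrite Rabs_mult.
  apply Rmult_le_compat; try apply Rabs_pos; auto.
Qed.

Lemma choice_nat (P : nat -> (nat -> R) -> Prop) : (forall k, exists x, P k x) -> exists f, forall k, P k (f k).
Proof.
  intros H. exists (fun k => proj1_sig (constructive_indefinite_description _ (H k))).
  intros k. destruct (constructive_indefinite_description _ (H k)); auto.
Qed.

Lemma big_nat A N : exists k, (N <= k)%nat /\ A <= INR k.
Proof.
  destruct (INR_archimed 1 A ltac:(lra)) as [m Hm]. exists (Nat.max N m). split. lia.
  assert (INR m <= INR (Nat.max N m)) by (apply le_INR; lia). lra.
Qed.

Lemma close_vnorm n x y d : 0 < d -> (forall i, (i < n)%nat -> Rabs (x i - y i) < d / (INR n + 1)) ->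
  vnorm n (vsub x y) < d.
Proof. intros Hd H. apply vnorm_small; auto. intros i Hi. left. apply H; auto. Qed.

Lemma div_pos_n n d : 0 < d -> 0 < d / (INR n + 1).
Proof. intros. apply Rdiv_lt_0_compat; auto. pose proof (pos_INR n); lra. Qed.

Section Compact.
Variable n : nat.
Variable psi : (nat -> R) -> R.
Variable g : (nat -> R) -> (nat -> R).
Hypothesis HC1 : C1_with_gradient n psi g.
Hypothesis Hsc : strictly_convex n psi.

Lemma g_bound R0 : exists K, 0 <= K /\ forall x, (forall i, (i < n)%nat -> Rabs (x i) <= R0) ->
  forall i, (i < n)%nat -> Rabs (g x i) <= K.
Proof.
  apply NNPP. intro Hno.
  assert (Hk : forall k, exists x, (forall i, (i < n)%nat -> Rabs (x i) <= R0) /\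
                exists i, (i < n)%nat /\ INR k < Rabs (g x i)).
  { intros k. apply NNPP. intro Hn. apply Hno. exists (INR k). split. apply pos_INR.
    intros x Hx i Hi. apply Rnot_lt_le. intro Hc. apply Hn. exists x. split; eauto. }
  destruct (choice_nat _ Hk) as [xs Hxs].
  destruct (BWn n xs R0) as [phi [y [Hphi Hcv]]]. { intros k i Hi. apply (proj1 (Hxs k)); auto. }
  destruct (proj2 (HC1 y) 1 Rlt_0_1) as [d [Hd0 Hd1]].
  destruct (scv_unif n (fun k i => xs (phi k) i) y Hcv (d / (INR n + 1)) (div_pos_n n d Hd0)) as [N HN].
  destruct (big_nat (vnorm n (g y) + 1) N) as [k [Hk1 Hk2]].
  assert (Hv : vnorm n (vsub (g (xs (phi k))) (g y)) < 1).
  { apply Hd1. apply close_vnorm; auto. }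
  destruct (proj2 (Hxs (phi k))) as [i [Hi Hgi]].
  pose proof (coord_le_vnorm n (vsub (g (xs (phi k))) (g y)) i Hi).
  pose proof (coord_le_vnorm n (g y) i Hi).
  assert (Hab : Rabs (g (xs (phi k)) i - g y i) <= vnorm n (vsub (g (xs (phi k))) (g y))) by exact H.
  pose proof (Rabs_triang (g (xs (phi k)) i - g y i) (g y i)).
  replace (g (xs (phi k)) i - g y i + g y i) with (g (xs (phi k)) i) in H1 by ring.
  assert (INR k <= INR (phi k)) by (apply le_INR; apply incr_ge; auto).
  lra.
Qed.

Lemma Dg_lower dl R0 : 0 < dl -> exists c, 0 < c /\ forall x, (forall i, (i < n)%nat -> Rabs (x i) <= R0) ->
  (exists i, (i < n)%nat /\ dl <= Rabs (x i)) -> c <= Dg n g x.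
Proof.
  intros Hdl. apply NNPP. intro Hno.
  assert (Hk : forall k, exists x, (forall i, (i < n)%nat -> Rabs (x i) <= R0) /\
                (exists i, (i < n)%nat /\ dl <= Rabs (x i)) /\ Dg n g x < / (INR k + 1)).
  { intros k. apply NNPP. intro Hn. apply Hno. exists (/ (INR k + 1)). split.
    apply Rinv_0_lt_compat; pose proof (pos_INR k); lra.
    intros x Hx Hi. apply Rnot_lt_le. intro Hc. apply Hn. exists x. auto. }
  destruct (choice_nat _ Hk) as [xs Hxs].
  destruct (BWn n xs R0) as [phi [y [Hphi Hcv]]]. { intros k i Hi. apply (proj1 (Hxs k)); auto. }
  assert (HR0 : 0 <= R0 \/ n = O).
  { destruct n. auto. left. pose proof (proj1 (Hxs O) O ltac:(lia)). pose proof (Rabs_pos (xs O O)). lra. }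
  assert (Hy : vneq n y zerov).
  { destruct (scv_unif n (fun k i => xs (phi k) i) y Hcv (dl/2) ltac:(lra)) as [N HN].
    destruct (proj1 (proj2 (Hxs (phi N)))) as [i [Hi Hxi]].
    exists i. split; auto. unfold zerov. intro Hy0. specialize (HN N (le_n N) i Hi). simpl in HN.
    rewrite Hy0 in HN. rewrite Rminus_0_r in HN. lra. }
  pose proof (Dg_pos n psi g HC1 Hsc y Hy) as HDy.
  set (Dy := Dg n g y) in *.
  set (Gy := vnorm n (vsub (g y) (g zerov))).
  assert (HGy : 0 <= Gy) by apply vnorm_nonneg.
  set (nn := INR n). assert (Hnn : 0 <= nn) by apply pos_INR.
  set (eta := Dy / (4 * (nn * Rabs R0 + 1))).
  assert (Heta : 0 < eta) by (unfold eta; apply Rdiv_lt_0_compat; [lra|]; pose proof (Rabs_pos R0); nra).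
  destruct (proj2 (HC1 y) eta Heta) as [d [Hd0 Hd1]].
  set (zeta := Rmin (d / (nn + 1)) (Dy / (4 * (nn * Gy + 1)))).
  assert (Hz : 0 < zeta).
  { unfold zeta. apply Rmin_pos. apply div_pos_n; auto. apply Rdiv_lt_0_compat; [lra|]. nra. }
  destruct (scv_unif n (fun k i => xs (phi k) i) y Hcv zeta Hz) as [N HN].
  destruct (arch_inv (Dy/2) ltac:(lra)) as [k0 Hk0].
  set (k := Nat.max N k0).
  set (x := xs (phi k)).
  assert (Hxy : forall i, (i < n)%nat -> Rabs (x i - y i) < zeta) by (intros; apply HN; unfold k; lia).
  assert (Hgx : vnorm n (vsub (g x) (g y)) < eta).
  { apply Hd1. apply close_vnorm; auto. intros i Hi. specialize (Hxy i Hi).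
    pose proof (Rmin_l (d / (nn + 1)) (Dy / (4 * (nn * Gy + 1)))). fold nn. unfold zeta in *. lra. }
  assert (Hdec : Dg n g x - Dy = dot n (vsub (g x) (g y)) x + dot n (vsub (g y) (g zerov)) (vsub x y)).
  { unfold Dy, Dg, dot, vsub. rewrite <- !rsum_minus, <- rsum_plus. apply rsum_ext; intros; ring. }
  assert (H1 : Rabs (dot n (vsub (g x) (g y)) x) <= nn * (eta * Rabs R0)).
  { apply dot_bound. lra. intros i Hi. pose proof (coord_le_vnorm n (vsub (g x) (g y)) i Hi). lra.
    intros i Hi. pose proof (proj1 (Hxs (phi k)) i Hi). pose proof (Rle_abs R0). fold x in H. lra. }
  assert (H2 : Rabs (dot n (vsub (g y) (g zerov)) (vsub x y)) <= nn * (Gy * (Dy / (4 * (nn * Gy + 1))))).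
  { apply dot_bound. auto. intros i Hi. apply coord_le_vnorm; auto.
    intros i Hi. specialize (Hxy i Hi). pose proof (Rmin_r (d / (nn + 1)) (Dy / (4 * (nn * Gy + 1)))).
    unfold vsub. unfold zeta in *. lra. }
  assert (H1' : nn * (eta * Rabs R0) <= Dy / 4).
  { unfold eta. pose proof (Rabs_pos R0).
    replace (nn * (Dy / (4 * (nn * Rabs R0 + 1)) * Rabs R0)) with (Dy / 4 * ((nn * Rabs R0) / (nn * Rabs R0 + 1))) by (field; nra).
    assert (nn * Rabs R0 / (nn * Rabs R0 + 1) <= 1).
    { apply Rmult_le_reg_r with (nn * Rabs R0 + 1). nra. unfold Rdiv. rewrite Rmult_assoc, Rinv_l by nra. nra. }
    nra. }
  assert (H2' : nn * (Gy * (Dy / (4 * (nn * Gy + 1)))) <= Dy / 4).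
  { replace (nn * (Gy * (Dy / (4 * (nn * Gy + 1))))) with (Dy / 4 * ((nn * Gy) / (nn * Gy + 1))) by (field; nra).
    assert (nn * Gy / (nn * Gy + 1) <= 1).
    { apply Rmult_le_reg_r with (nn * Gy + 1). nra. unfold Rdiv. rewrite Rmult_assoc, Rinv_l by nra. nra. }
    nra. }
  pose proof (Rabs_triang (dot n (vsub (g x) (g y)) x) (dot n (vsub (g y) (g zerov)) (vsub x y))).
  rewrite <- Hdec in H. pose proof (Rle_abs (- (Dg n g x - Dy))). rewrite Rabs_Ropp in H0.
  pose proof (proj2 (proj2 (Hxs (phi k)))). fold x in H3.
  assert (INR k0 <= INR (phi k)). { apply le_INR. pose proof (incr_ge phi Hphi k). unfold k in *. lia. }
  assert (/ (INR (phi k) + 1) <= / (INR k0 + 1)).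
  { apply Rinv_le_contravar. pose proof (pos_INR k0); lra. lra. }
  lra.
Qed.
End Compact.

Lemma dpl_eq f x l l' : derivable_pt_lim f x l -> l = l' -> derivable_pt_lim f x l'.
Proof. intros H ->; auto. Qed.

Lemma d_minus_const f c x l : derivable_pt_lim f x l -> derivable_pt_lim (fun s => f s - c) x l.
Proof. intros H. pose proof (derivable_pt_lim_minus f (fct_cte c) x l 0 H (derivable_pt_lim_const c x)).
  rewrite Rminus_0_r in H0. exact H0. Qed.

Lemma d_sq f g x a b : derivable_pt_lim f x a -> derivable_pt_lim g x b ->
  derivable_pt_lim (fun s => / 2 * (f s * f s + g s * g s)) x (f x * a + g x * b).
Proof.
  intros Hf Hg.
  pose proof (derivable_pt_lim_mult f f x a a Hf Hf) as H1.
  pose proof (derivable_pt_lim_mult g g x b b Hg Hg) as H2.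
  pose proof (derivable_pt_lim_plus _ _ x _ _ H1 H2) as H3.
  pose proof (derivable_pt_lim_scal _ (/2) x _ H3) as H4.
  eapply dpl_eq. exact H4. field.
Qed.

Lemma mvt_le f f' s t K : 0 < s -> s <= t -> (forall c, 0 < c -> derivable_pt_lim f c (f' c)) ->
  (forall c, s <= c <= t -> f' c <= K) -> f t - f s <= K * (t - s).
Proof.
  intros Hs Hst Hd Hb. destruct (Req_dec s t) as [->|Hne]. lra.
  destruct (MVT_cor2 f f' s t ltac:(lra)) as [c [Hc1 Hc2]].
  { intros c Hc. apply Hd. lra. }
  rewrite Hc1. specialize (Hb c ltac:(lra)). nra.
Qed.

Lemma mvt_ge f f' s t K : 0 < s -> s <= t -> (forall c, 0 < c -> derivable_pt_lim f c (f' c)) ->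
  (forall c, s <= c <= t -> K <= f' c) -> K * (t - s) <= f t - f s.
Proof.
  intros Hs Hst Hd Hb. destruct (Req_dec s t) as [->|Hne]. lra.
  destruct (MVT_cor2 f f' s t ltac:(lra)) as [c [Hc1 Hc2]].
  { intros c Hc. apply Hd. lra. }
  rewrite Hc1. specialize (Hb c ltac:(lra)). nra.
Qed.

Lemma mvt_abs f f' s t K : 0 < s -> s <= t -> (forall c, 0 < c -> derivable_pt_lim f c (f' c)) ->
  (forall c, s <= c <= t -> Rabs (f' c) <= K) -> Rabs (f t - f s) <= K * (t - s).
Proof.
  intros Hs Hst Hd Hb. apply Rabs_le. split.
  - assert (- K * (t - s) <= f t - f s).
    { apply (mvt_ge f f'); auto. intros c Hc. specialize (Hb c Hc). apply Rabs_le_bt in Hb. lra. } lra.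
  - apply (mvt_le f f'); auto. intros c Hc. specialize (Hb c Hc). apply Rabs_le_bt in Hb. lra.
Qed.

Lemma abs_le_sq x a : x * x <= a -> Rabs x <= a + 1.
Proof.
  intros H. destruct (Rle_lt_dec (Rabs x) 1). assert (0 <= x * x) by nra. lra.
  assert (Rabs x * Rabs x = x * x) by (rewrite <- Rabs_mult; apply Rabs_pos_eq; nra). nra.
Qed.

Section Dyn.
Variables (n m : nat) (M B : nat -> nat -> R) (psi : (nat -> R) -> R) (g : (nat -> R) -> (nat -> R))
  (u : nat -> R) (q p : R -> nat -> R) (Minv : nat -> nat -> R).
Hypothesis HC1 : C1_with_gradient n psi g.
Hypothesis Hsc : strictly_convex n psi.
Hypothesis Htraj : forall t, 0 < t -> forall i, (i < n)%nat ->
     derivable_pt_lim (fun s => q s i) t (matvec n M (p t) i) /\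
     derivable_pt_lim (fun s => p s i) t
       (- matTvec n M (q t) i - g (p t) i + matvec m B u i).
Hypothesis Hinv : is_inverse n M Minv.

Definition q0 := vsub (matTvec n Minv (matvec m B u)) (matTvec n Minv (g zerov)).
Definition Q t i := q t i - q0 i.
Definition F t := matTvec n M (Q t).
Definition Hh t := vsub (g (p t)) (g zerov).
Definition V t := rsum n (fun i => / 2 * (Q t i * Q t i + p t i * p t i)).

Lemma MTq0 i : (i < n)%nat -> matTvec n M q0 i = matvec m B u i - g zerov i.
Proof.
  intros Hi. set (w := fun k => matvec m B u k - g zerov k).
  unfold matTvec, q0, vsub.
  transitivity (rsum n (fun j => rsum n (fun k => M j i * (Minv k j * w k)))).
  { apply rsum_ext; intros j Hj. rewrite rsum_scal. f_equal. unfold matTvec. rewrite <- rsum_minus.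
    apply rsum_ext; intros; unfold w; ring. }
  rewrite rsum_swap.
  transitivity (rsum n (fun k => (if Nat.eqb k i then 1 else 0) * w k)).
  { apply rsum_ext; intros k Hk. rewrite <- (proj2 (Hinv k i Hk Hi)).
    rewrite Rmult_comm, <- rsum_scal. apply rsum_ext; intros; ring. }
  apply rsum_delta; auto.
Qed.

Lemma dQ t i : 0 < t -> (i < n)%nat -> derivable_pt_lim (fun s => Q s i) t (matvec n M (p t) i).
Proof. intros Ht Hi. unfold Q. apply d_minus_const. apply Htraj; auto. Qed.

Lemma dp t i : 0 < t -> (i < n)%nat -> derivable_pt_lim (fun s => p s i) t (- F t i - Hh t i).
Proof.
  intros Ht Hi. eapply dpl_eq. apply Htraj; auto.
  assert (matTvec n M (q t) i = F t i + matTvec n M q0 i).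
  { unfold F, matTvec, Q. rewrite <- rsum_plus. apply rsum_ext; intros; ring. }
  rewrite H, MTq0 by auto. unfold Hh, vsub. ring.
Qed.

Lemma dV t : 0 < t -> derivable_pt_lim V t (- Dg n g (p t)).
Proof.
  intros Ht. unfold V. eapply dpl_eq.
  apply (rsum_deriv n (fun i s => / 2 * (Q s i * Q s i + p s i * p s i))
           (fun i => Q t i * matvec n M (p t) i + p t i * (- F t i - Hh t i))).
  { intros i Hi. apply d_sq. apply dQ; auto. apply dp; auto. }
  rewrite rsum_plus.
  assert (E : rsum n (fun i => Q t i * matvec n M (p t) i) = rsum n (fun i => p t i * F t i)).
  { unfold matvec, F, matTvec.
    transitivity (rsum n (fun i => rsum n (fun j => Q t i * M i j * p t j))).
    { apply rsum_ext; intros. rewrite <- rsum_scal. apply rsum_ext; intros; ring. }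
    rewrite rsum_swap. apply rsum_ext; intros. rewrite <- rsum_scal. apply rsum_ext; intros; ring. }
  rewrite E. unfold Dg, dot. fold (Hh t).
  rewrite <- rsum_plus, <- rsum_opp. apply rsum_ext; intros. ring.
Qed.

Lemma V_nonneg t : 0 <= V t.
Proof. unfold V. apply rsum_nonneg. intros. nra. Qed.

Lemma V_decr s t : 0 < s -> s <= t -> V t <= V s.
Proof.
  intros Hs Hst. assert (V t - V s <= 0 * (t - s)).
  { apply (mvt_le V (fun c => - Dg n g (p c))); auto.
    intros; apply dV; auto. intros c Hc. pose proof (Dg_nonneg n psi g HC1 Hsc (p c)). lra. }
  lra.
Qed.

Definition Rb := 2 * V 1 + 1.

Lemma R0_ge1 : 1 <= Rb.
Proof. unfold Rb. pose proof (V_nonneg 1). lra. Qed.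

Lemma traj_bound t i : 1 <= t -> (i < n)%nat -> Rabs (Q t i) <= Rb /\ Rabs (p t i) <= Rb.
Proof.
  intros Ht Hi. pose proof (V_decr 1 t ltac:(lra) Ht).
  assert (/ 2 * (Q t i * Q t i + p t i * p t i) <= V t).
  { unfold V. apply (rsum_term n (fun i => / 2 * (Q t i * Q t i + p t i * p t i))); auto. intros; nra. }
  split; unfold Rb; apply abs_le_sq; nra.
Qed.

Lemma Q_identity t i : (i < n)%nat -> Q t i = rsum n (fun k => Minv k i * F t k).
Proof.
  intros Hi. unfold F, matTvec.
  transitivity (rsum n (fun j => (if Nat.eqb j i then 1 else 0) * Q t j)).
  { symmetry; apply rsum_delta; auto. }
  transitivity (rsum n (fun k => rsum n (fun j => Minv k i * (M j k * Q t j)))).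
  2:{ apply rsum_ext; intros. rewrite rsum_scal. auto. }
  rewrite rsum_swap. apply rsum_ext; intros j Hj. rewrite <- (proj1 (Hinv j i Hj Hi)).
  rewrite Rmult_comm, <- rsum_scal. apply rsum_ext; intros; ring.
Qed.

Section Bounds.
Variables (CM Kg : R).
Hypothesis HCM0 : 0 <= CM.
Hypothesis HCM : forall i j, (i < n)%nat -> (j < n)%nat -> Rabs (M i j) <= CM.
Hypothesis HKg0 : 0 <= Kg.
Hypothesis HKg : forall x, (forall i, (i < n)%nat -> Rabs (x i) <= Rb) -> forall i, (i < n)%nat -> Rabs (g x i) <= Kg.

Definition K1 := INR n * (CM * Rb) + 2 * Kg + 1.
Definition K2 := INR n * (CM * Rb) + 1.

Lemma R0_pos : 0 <= Rb.
Proof. pose proof R0_ge1; lra. Qed.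

Lemma K1_pos : 0 < K1.
Proof. unfold K1. pose proof (pos_INR n). pose proof R0_pos. assert (0 <= CM * Rb) by nra. nra. Qed.
Lemma K2_pos : 0 < K2.
Proof. unfold K2. pose proof (pos_INR n). pose proof R0_pos. assert (0 <= CM * Rb) by nra. nra. Qed.

Lemma dp_bound c i : 1 <= c -> (i < n)%nat -> Rabs (- F c i - Hh c i) <= K1.
Proof.
  intros Hc Hi.
  assert (HF : Rabs (F c i) <= INR n * (CM * Rb)).
  { unfold F, matTvec. apply rsum_bound. intros j Hj. rewrite Rabs_mult.
    apply Rmult_le_compat; try apply Rabs_pos; auto. apply traj_bound; auto. }
  assert (HH : Rabs (Hh c i) <= 2 * Kg).
  { unfold Hh, vsub. eapply Rle_trans. apply Rabs_triang. rewrite Rabs_Ropp.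
    assert (Rabs (g (p c) i) <= Kg) by (apply HKg; auto; intros; apply traj_bound; auto).
    assert (Rabs (g zerov i) <= Kg) by (apply HKg; auto; intros; unfold zerov; rewrite Rabs_R0; apply R0_pos).
    lra. }
  unfold K1. eapply Rle_trans. apply Rabs_triang. rewrite Rabs_Ropp. pose proof (Rabs_Ropp (F c i)).
  unfold Rminus. rewrite Rabs_Ropp. 
  pose proof (Rabs_triang (- F c i) (- Hh c i)). rewrite !Rabs_Ropp in H0. lra.
Qed.

Lemma dQ_bound c i : 1 <= c -> (i < n)%nat -> Rabs (matvec n M (p c) i) <= K2.
Proof.
  intros Hc Hi. unfold K2.
  assert (Rabs (matvec n M (p c) i) <= INR n * (CM * Rb)).
  { unfold matvec. apply rsum_bound. intros j Hj. rewrite Rabs_mult.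
    apply Rmult_le_compat; try apply Rabs_pos; auto. apply traj_bound; auto. }
  lra.
Qed.

Lemma p_lip s t i : 1 <= s -> s <= t -> (i < n)%nat -> Rabs (p t i - p s i) <= K1 * (t - s).
Proof.
  intros Hs Hst Hi. apply (mvt_abs (fun c => p c i) (fun c => - F c i - Hh c i)); try lra.
  intros; apply dp; auto. intros c Hc. apply dp_bound; auto; lra.
Qed.

Lemma Q_lip s t i : 1 <= s -> s <= t -> (i < n)%nat -> Rabs (Q t i - Q s i) <= K2 * (t - s).
Proof.
  intros Hs Hst Hi. apply (mvt_abs (fun c => Q c i) (fun c => matvec n M (p c) i)); try lra.
  intros; apply dQ; auto. intros c Hc. apply dQ_bound; auto; lra.
Qed.

Lemma p_to0 i : (i < n)%nat -> forall eps, 0 < eps -> exists T, forall t, T <= t -> Rabs (p t i) < eps.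
Proof.
  intros Hi eps He. apply NNPP; intro Hno.
  assert (Hfar : forall T, exists t, T <= t /\ eps <= Rabs (p t i)).
  { intros T. apply NNPP; intro Hn. apply Hno. exists T. intros t Ht. apply Rnot_le_lt. intro. apply Hn; eauto. }
  pose proof K1_pos as HK1.
  set (tau := eps / (2 * K1)).
  assert (Htau : 0 < tau) by (unfold tau; apply Rdiv_lt_0_compat; lra).
  assert (HKt : K1 * tau = eps / 2) by (unfold tau; field; lra).
  destruct (Dg_lower n psi g HC1 Hsc (eps/2) Rb ltac:(lra)) as [c [Hc HcD]].
  assert (Hclaim : forall N, exists t, 1 <= t /\ V t <= V 1 - INR N * (c * tau)).
  { induction N.
    - exists 1. simpl. lra.
    - destruct IHN as [t [Ht HV]]. destruct (Hfar t) as [t' [Ht' Hp']].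
      exists (t' + tau). split. lra.
      assert (V (t' + tau) - V t' <= (- c) * (t' + tau - t')).
      { apply (mvt_le V (fun s => - Dg n g (p s))). lra. lra. intros; apply dV; auto.
        intros s Hs. assert (c <= Dg n g (p s)); [|lra].
        apply HcD. intros j Hj. apply traj_bound; auto; lra.
        exists i. split; auto.
        pose proof (p_lip t' s i ltac:(lra) ltac:(lra) Hi).
        pose proof (Rabs_triang (p t' i - p s i) (p s i)).
        replace (p t' i - p s i + p s i) with (p t' i) in H0 by ring.
        assert (Rabs (p t' i - p s i) = Rabs (p s i - p t' i)) by (rewrite <- Rabs_Ropp; f_equal; ring).
        assert (K1 * (s - t') <= K1 * tau) by (apply Rmult_le_compat_l; lra). lra. }
      pose proof (V_decr t t' ltac:(lra) Ht'). rewrite S_INR. lra. }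
  destruct (INR_archimed (c * tau) (V 1)) as [N HN]. { apply Rmult_lt_0_compat; lra. }
  destruct (Hclaim N) as [t [_ Ht]]. pose proof (V_nonneg t). lra.
Qed.

Lemma Hh_to0 eta : 0 < eta -> exists T, forall t, T <= t -> forall i, (i < n)%nat -> Rabs (Hh t i) < eta.
Proof.
  intros He. destruct (proj2 (HC1 zerov) eta He) as [d [Hd Hd1]].
  destruct (tcv_unif n p zerov) with (eps := d / (INR n + 1)) as [T HT].
  { intros i Hi eps Heps. destruct (p_to0 i Hi eps Heps) as [T HT]. exists T. intros t Ht.
    unfold zerov. rewrite Rminus_0_r. auto. }
  apply div_pos_n; auto.
  exists T. intros t Ht i Hi.
  assert (vnorm n (vsub (g (p t)) (g zerov)) < eta).
  { apply Hd1. apply close_vnorm; auto. }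
  pose proof (coord_le_vnorm n (vsub (g (p t)) (g zerov)) i Hi). unfold Hh. lra.
Qed.

Lemma F_to0 i : (i < n)%nat -> forall eps, 0 < eps -> exists T, forall t, T <= t -> Rabs (F t i) < eps.
Proof.
  intros Hi eps He. apply NNPP; intro Hno.
  assert (Hfar : forall T, exists t, T <= t /\ eps <= Rabs (F t i)).
  { intros T. apply NNPP; intro Hn. apply Hno. exists T. intros t Ht. apply Rnot_le_lt. intro. apply Hn; eauto. }
  pose proof K2_pos as HK2. pose proof (pos_INR n) as Hn.
  remember (INR n * CM * K2) as a eqn:Ea.
  assert (Ha : 0 <= a) by (rewrite Ea; apply Rmult_le_pos; [apply Rmult_le_pos|]; lra).
  remember (eps / (4 * (a + 1))) as tau eqn:Et.
  assert (Htau : 0 < tau) by (rewrite Et; apply Rdiv_lt_0_compat; lra).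
  assert (HA : INR n * (CM * (K2 * tau)) <= eps / 4).
  { replace (INR n * (CM * (K2 * tau))) with (eps / 4 * (a / (a + 1))).
    2:{ rewrite Et, Ea. rewrite Ea in Ha. field. lra. }
    assert (a / (a + 1) <= 1).
    { apply Rmult_le_reg_r with (a + 1). lra. unfold Rdiv. rewrite Rmult_assoc, Rinv_l by lra. lra. }
    nra. }
  destruct (Hh_to0 (eps / 4) ltac:(lra)) as [T1 HT1].
  destruct (p_to0 i Hi (eps * tau / 8)) as [T2 HT2]. { nra. }
  destruct (Hfar (Rmax 1 (Rmax T1 T2))) as [t [Ht Hft]].
  pose proof (Rmax_l 1 (Rmax T1 T2)). pose proof (Rmax_r 1 (Rmax T1 T2)).
  pose proof (Rmax_l T1 T2). pose proof (Rmax_r T1 T2).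
  assert (HFs : forall s, t <= s <= t + tau -> Rabs (F s i - F t i) <= eps / 4).
  { intros s Hs. unfold F, matTvec. rewrite <- rsum_minus.
    eapply Rle_trans; [|exact HA]. apply rsum_bound. intros j Hj.
    replace (M j i * Q s j - M j i * Q t j) with (M j i * (Q s j - Q t j)) by ring.
    rewrite Rabs_mult. apply Rmult_le_compat; try apply Rabs_pos; auto.
    eapply Rle_trans. apply Q_lip; auto; lra. apply Rmult_le_compat_l; lra. }
  assert (HHs : forall s, t <= s -> Rabs (Hh s i) < eps / 4) by (intros; apply HT1; auto; lra).
  assert (Hp1 : Rabs (p t i) < eps * tau / 8) by (apply HT2; lra).
  assert (Hp2 : Rabs (p (t + tau) i) < eps * tau / 8) by (apply HT2; lra).
  destruct (Rle_or_lt 0 (F t i)) as [Hpos|Hneg].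
  - rewrite Rabs_pos_eq in Hft by lra.
    assert (p (t + tau) i - p t i <= (- (eps / 2)) * (t + tau - t)).
    { apply (mvt_le (fun s => p s i) (fun s => - F s i - Hh s i)). lra. lra.
      intros; apply dp; auto. intros s Hs. specialize (HFs s Hs). specialize (HHs s ltac:(lra)).
      apply Rabs_def2 in HHs. apply Rabs_le_bt in HFs. lra. }
    apply Rabs_def2 in Hp1. apply Rabs_def2 in Hp2. nra.
  - rewrite Rabs_left in Hft by lra.
    assert ((eps / 2) * (t + tau - t) <= p (t + tau) i - p t i).
    { apply (mvt_ge (fun s => p s i) (fun s => - F s i - Hh s i)). lra. lra.
      intros; apply dp; auto. intros s Hs. specialize (HFs s Hs). specialize (HHs s ltac:(lra)).
      apply Rabs_def2 in HHs. apply Rabs_le_bt in HFs. lra. }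
    apply Rabs_def2 in Hp1. apply Rabs_def2 in Hp2. nra.
Qed.
End Bounds.
End Dyn.

Theorem mainTheorem14
  (n m : nat) (M : nat -> nat -> R) (B : nat -> nat -> R)
  (psi : (nat -> R) -> R) (gradpsi : (nat -> R) -> (nat -> R))
  (u : nat -> R) (q p : R -> nat -> R) :
  invertible n M ->
  C1_with_gradient n psi gradpsi ->
  locally_lipschitz n gradpsi ->
  strictly_convex n psi ->
  superlinear n psi ->
  (* (q,p) is a trajectory of the system on t > 0 with constant input u *)
  (forall t, 0 < t -> forall i, (i < n)%nat ->
     derivable_pt_lim (fun s => q s i) t (matvec n M (p t) i) /\
     derivable_pt_lim (fun s => p s i) t
       (- matTvec n M (q t) i - gradpsi (p t) i + matvec m B u i)) ->
  forall Minv, is_inverse n M Minv ->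
    vconverges n p zerov /\
    vconverges n q
      (vsub (matTvec n Minv (matvec m B u)) (matTvec n Minv (gradpsi zerov))).
Proof.
  intros _ HC1 _ Hsc _ Htraj Minv Hinv.
  destruct (mat_bound n M) as [CM [HCM0 HCM]].
  destruct (g_bound n psi gradpsi HC1 (Rb n m B gradpsi u q p Minv)) as [Kg [HKg0 HKg]].
  destruct (mat_bound n Minv) as [CMi [HCMi0 HCMi]].
  pose proof (p_to0 n m M B psi gradpsi u q p Minv HC1 Hsc Htraj Hinv CM Kg HCM0 HCM HKg0 HKg) as Hp.
  pose proof (F_to0 n m M B psi gradpsi u q p Minv HC1 Hsc Htraj Hinv CM Kg HCM0 HCM HKg0 HKg) as HF.
  split.
  - intros eps He. destruct (tcv_unif n p zerov) with (eps := eps / (INR n + 1)) as [T HT].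
    { intros i Hi e He'. destruct (Hp i Hi e He') as [T HT]. exists T. intros t Ht.
      unfold zerov. rewrite Rminus_0_r. auto. }
    apply div_pos_n; auto.
    exists T. intros t Ht. apply close_vnorm; auto.
  - intros eps He.
    set (eta := (eps / (INR n + 1)) / (2 * (INR n * CMi + 1))).
    assert (Hn : 0 <= INR n) by apply pos_INR.
    assert (Hnc : 0 <= INR n * CMi) by nra.
    assert (Heta : 0 < eta) by (unfold eta; apply Rdiv_lt_0_compat; [apply div_pos_n; auto | lra]).
    destruct (tcv_unif n (F n m M B gradpsi u q Minv) zerov) with (eps := eta) as [T HT]; auto.
    { intros i Hi e He'. destruct (HF i Hi e He') as [T HT]. exists T. intros t Ht.
      unfold zerov. rewrite Rminus_0_r. auto. }
    exists T. intros t Ht. apply close_vnorm; auto.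
    intros i Hi.
    change (q t i - q0 n m B gradpsi u Minv i) with (Q n m B gradpsi u q Minv t i).
    assert (E : Q n m B gradpsi u q Minv t i = q t i - vsub (matTvec n Minv (matvec m B u)) (matTvec n Minv (gradpsi zerov)) i) by reflexivity.
    rewrite <- E. rewrite (Q_identity n m M B gradpsi u q Minv Hinv t i Hi).
    eapply Rle_lt_trans. apply (rsum_bound n _ (CMi * eta)).
    { intros k Hk. rewrite Rabs_mult. apply Rmult_le_compat; try apply Rabs_pos; auto.
      left. specialize (HT t Ht k Hk). unfold zerov in HT. rewrite Rminus_0_r in HT. auto. }
    set (e1 := eps / (INR n + 1)) in *.
    assert (He1 : 0 < e1) by (apply div_pos_n; auto).
    assert (Eeta : eta * (2 * (INR n * CMi + 1)) = e1) by (unfold eta; field; lra).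
    clearbody eta e1. nra.
Qed.
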